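(* Let $K$ be a field and $m,n,r$ positive integers. For positive integers $a,b,c$, let $R_{abc}=K[x_{ij}^k\mid 1\le i\le a,1\le j\le b,1\le k\le c]$ and let $I_{ab}^c\subseteq R_{abc}$ be the ideal generated by all $2$-minors of the horizontal concatenation $(X_1\ \cdots\ X_c)$ and all $2$-minors of the vertical concatenation (the $X_k$ stacked vertically) of the $a\times b$ matrices $X_k=(x_{ij}^k)$, $k=1,\dots,c$. Let $\sigma$ be any permutation of $(m,n,r)$, i.e. $(\sigma(m),\sigma(n),\sigma(r))$ is a reordering of the triple $(m,n,r)$. Then $R_{mnr}/I_{mn}^r\cong R_{\sigma(m)\sigma(n)\sigma(r)}/I_{\sigma(m)\sigma(n)}^{\sigma(r)}$ as $K$-algebras. *)

(* Defs.v *)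
From HB Require Import structures.
From mathcomp Require Import all_boot all_order all_algebra.
From mathcomp Require Import ring_quotient.
From mathcomp Require Import mpoly.
From Stdlib Require Import ClassicalEpsilon.

Set Implicit Arguments.
Unset Strict Implicit.
Unset Printing Implicit Defensive.

Import GRing.Theory.
Local Open Scope ring_scope.
Local Open Scope quotient_scope.

Definition pbool (P : Prop) : bool :=
  if excluded_middle_informative P then true else false.

Lemma pboolP (P : Prop) : reflect P (pbool P).
Proof. by rewrite /pbool; case: excluded_middle_informative => h; constructor. Qed.

Definition ideal_gen (R : comNzRingType) (G : R -> Prop) (p : R) : Prop :=
  exists s : seq (R * R), (forall q, q \in s -> G q.2) /\
                          p = \sum_(q <- s) q.1 * q.2.

Definition idx (a b c : nat) := ('I_a * 'I_b * 'I_c)%type.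

Definition Rabc (K : fieldType) (a b c : nat) := {mpoly K[#|{: idx a b c}|]}.

Definition xv (K : fieldType) (a b c : nat) (i : 'I_a) (j : 'I_b) (k : 'I_c)
  : Rabc K a b c := 'X_(enum_rank ((i, j, k) : idx a b c)).

Definition minor2 (R : comNzRingType) (rT cT : Type) (M : rT -> cT -> R)
  (r1 r2 : rT) (c1 c2 : cT) : R :=
  M r1 c1 * M r2 c2 - M r1 c2 * M r2 c1.

(* Horizontal concatenation (X_1 ... X_c): an a x (c*b) matrix; its column
   (k, j) (block k, column j inside the block) has position k*b + j. *)
Definition hcat (K : fieldType) (a b c : nat) (i : 'I_a) (kj : 'I_c * 'I_b)
  : Rabc K a b c := xv K i kj.2 kj.1.
Definition hcat_col (b c : nat) (kj : 'I_c * 'I_b) : nat := kj.1 * b + kj.2.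

(* Vertical concatenation (X_1 over ... over X_c): a (c*a) x b matrix; its row
   (k, i) has position k*a + i. *)
Definition vcat (K : fieldType) (a b c : nat) (ki : 'I_c * 'I_a) (j : 'I_b)
  : Rabc K a b c := xv K ki.2 j ki.1.
Definition vcat_row (a c : nat) (ki : 'I_c * 'I_a) : nat := ki.1 * a + ki.2.

Definition minor_gens (K : fieldType) (a b c : nat) (p : Rabc K a b c) : Prop :=
  (exists (i1 i2 : 'I_a) (c1 c2 : 'I_c * 'I_b),
      (i1 < i2)%N /\ (hcat_col c1 < hcat_col c2)%N /\
      p = minor2 (@hcat K a b c) i1 i2 c1 c2)
  \/
  (exists (r1 r2 : 'I_c * 'I_a) (j1 j2 : 'I_b),
      (vcat_row r1 < vcat_row r2)%N /\ (j1 < j2)%N /\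
      p = minor2 (@vcat K a b c) r1 r2 j1 j2).

Definition Iabc (K : fieldType) (a b c : nat) : {pred Rabc K a b c} :=
  fun p => pbool (ideal_gen (@minor_gens K a b c) p).

Lemma minor_gens_eval0 (K : fieldType) (a b c : nat) (p : Rabc K a b c) :
  minor_gens p -> p.@[fun=> 0] = 0.
Proof.
case=> [[i1 [i2 [c1 [c2 [_ [_ ->]]]]]]|[r1 [r2 [j1 [j2 [_ [_ ->]]]]]]];
  by rewrite /minor2 /hcat /vcat /xv rmorphB !rmorphM /= !mevalXU !mul0r subr0.
Qed.

Lemma Iabc_closed (K : fieldType) (a b c : nat) : idealr_closed (@Iabc K a b c).
Proof.
split.
- by apply/pboolP; exists [::]; split => //; rewrite big_nil.
- apply/negP => /pboolP [s [Hs E]].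
  have := congr1 (fun p : Rabc K a b c => p.@[fun=> 0]) E.
  rewrite /= rmorph1 rmorph_sum /= big1_seq; first by move/eqP; rewrite oner_eq0.
  by move=> q /Hs Hq; rewrite rmorphM /= (minor_gens_eval0 Hq) mulr0.
- move=> r u v /pboolP [su [Hu Eu]] /pboolP [sv [Hv Ev]].
  apply/pboolP; exists ([seq (r * q.1, q.2) | q <- su] ++ sv); split.
  + move=> q; rewrite mem_cat => /orP [/mapP [q' /Hu Hq' ->]|/Hv] //.
  + by rewrite big_cat big_map /= Eu Ev mulr_sumr; congr (_ + _);
      apply: eq_bigr => q _; rewrite mulrA.
Qed.

HB.instance Definition _ (K : fieldType) (a b c : nat) :=
  isIdealr.Build (Rabc K a b c) (@Iabc K a b c) (@Iabc_closed K a b c).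

Definition Qabc (K : fieldType) (a b c : nat) := {ideal_quot (@Iabc K a b c)}.

Definition Qcst (K : fieldType) (a b c : nat) (x : K) : Qabc K a b c :=
  \pi_(Qabc K a b c) (x%:MP : Rabc K a b c).

Definition kalg_iso (K : fieldType) (a b c a' b' c' : nat)
  (f : Qabc K a b c -> Qabc K a' b' c') : Prop :=
  [/\ bijective f, zmod_morphism f, monoid_morphism f &
      forall x : K, f (Qcst a b c x) = Qcst a' b' c' x].

(* Main.v *)
Require Import Defs.
From HB Require Import structures.
From mathcomp Require Import all_boot all_order all_algebra ring_quotient mpoly.
From mathcomp Require Import ring.

Set Implicit Arguments.
Unset Strict Implicit.
Unset Printing Implicit Defensive.
Import GRing.Theory.
Local Open Scope ring_scope.
Local Open Scope quotient_scope.

Section Basics.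
Variable K : fieldType.

Definition xt a b c (t : idx a b c) : Rabc K a b c := 'X_(enum_rank t).

Definition ren a b c a' b' c' (E : idx a b c -> Rabc K a' b' c') (p : Rabc K a b c)
  : Rabc K a' b' c' :=
  p \mPo [tuple E (enum_val (i : 'I_#|{: idx a b c}|)) | i < #|{: idx a b c}|].

Lemma ren_xt a b c a' b' c' (E : idx a b c -> Rabc K a' b' c') t :
  ren E (xt t) = E t.
Proof. by rewrite /ren /xt comp_mpolyXU -tnth_nth tnth_mktuple enum_rankK. Qed.

Lemma ren_xv a b c a' b' c' (E : idx a b c -> Rabc K a' b' c') i j k :
  ren E (xv K i j k) = E (i, j, k).
Proof. exact: ren_xt. Qed.

Lemma ren_C a b c a' b' c' (E : idx a b c -> Rabc K a' b' c') x :
  ren E x%:MP = x%:MP.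
Proof. exact: comp_mpolyC. Qed.

Lemma ren_ext a b c a' b' c' (E F : idx a b c -> Rabc K a' b' c') p :
  E =1 F -> ren E p = ren F p.
Proof.
move=> EF; rewrite /ren; congr (_ \mPo _); apply: eq_from_tnth => i.
by rewrite !tnth_mktuple EF.
Qed.

Lemma ren_id a b c p : ren (@xt a b c) p = p.
Proof.
rewrite -[RHS]comp_mpoly_id /ren; congr (_ \mPo _); apply: eq_from_tnth => i.
by rewrite !tnth_mktuple /xt enum_valK.
Qed.

Lemma comp_mpolyA n k l (R : comNzRingType) (lq : n.-tuple {mpoly R[k]})
  (lr : k.-tuple {mpoly R[l]}) (p : {mpoly R[n]}) :
  (p \mPo lq) \mPo lr = p \mPo [tuple (tnth lq i) \mPo lr | i < n].
Proof.
rewrite [p \mPo lq]comp_mpolyEX [p \mPo _]comp_mpolyEX (big_morph (comp_mpoly lr) (comp_mpolyD lr) (comp_mpoly0 lr)).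
apply: eq_bigr => m _; rewrite comp_mpolyZ !comp_mpolyX.
rewrite (big_morph (comp_mpoly lr) (rmorphM _) (rmorph1 _)).
congr (_ *: _); apply: eq_bigr => i _; rewrite rmorphXn tnth_mktuple //.
Qed.

Lemma ren_comp a b c a' b' c' a'' b'' c''
  (E : idx a b c -> Rabc K a' b' c') (F : idx a' b' c' -> Rabc K a'' b'' c'') p :
  ren F (ren E p) = ren (fun t => ren F (E t)) p.
Proof.
rewrite /ren comp_mpolyA; congr (_ \mPo _); apply: eq_from_tnth => i.
by rewrite !tnth_mktuple.
Qed.

End Basics.

Lemma minor_all (R : comNzRingType) (rT cT : Type) (M : rT -> cT -> R)
  (kr : rT -> nat) (kc : cT -> nat) (P : R -> Prop) :
  injective kr -> injective kc -> P 0 -> (forall x, P x -> P (- x)) ->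
  (forall r1 r2 c1 c2, (kr r1 < kr r2)%N -> (kc c1 < kc c2)%N ->
     P (minor2 M r1 r2 c1 c2)) ->
  forall r1 r2 c1 c2, P (minor2 M r1 r2 c1 c2).
Proof.
move=> ikr ikc P0 PN H.
have Hc r1 r2 c1 c2 : (kr r1 < kr r2)%N -> P (minor2 M r1 r2 c1 c2).
  move=> lt; case: (ltngtP (kc c1) (kc c2)) => h.
  - exact: H.
  - have -> : minor2 M r1 r2 c1 c2 = - minor2 M r1 r2 c2 c1 by rewrite /minor2; ring.
    exact/PN/H.
  - by rewrite (ikc _ _ h) /minor2 subrr.
move=> r1 r2 c1 c2; case: (ltngtP (kr r1) (kr r2)) => h.
- exact: Hc.
- have -> : minor2 M r1 r2 c1 c2 = - minor2 M r2 r1 c1 c2 by rewrite /minor2; ring.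
  exact/PN/Hc.
- have -> : minor2 M r1 r2 c1 c2 = 0 by rewrite (ikr _ _ h) /minor2; ring.
  exact: P0.
Qed.

Lemma key_inj (b c : nat) : injective (fun x : 'I_c * 'I_b => (x.1 * b + x.2)%N).
Proof.
move=> [k1 j1] [k2 j2] /= E.
have Hj : j1 = j2 :> nat.
  by move: (congr1 (modn^~ b) E); rewrite /= !modnMDl !modn_small.
have b0 : (0 < b)%N by apply: leq_ltn_trans (ltn_ord j1).
move: E; rewrite Hj => /addIn /eqP; rewrite eqn_pmul2r // => /eqP Hk.
by congr pair; apply: val_inj.
Qed.

Section Ideal.
Variable K : fieldType.

Lemma mem_gen a b c (p : Rabc K a b c) : minor_gens p -> p \in @Iabc K a b c.
Proof.
move=> h; apply/pboolP; exists [:: (1, p)]; split.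
  by move=> q; rewrite inE => /eqP ->.
by rewrite big_cons big_nil mul1r addr0.
Qed.

Lemma hcat_all a b c i1 i2 c1 c2 :
  minor2 (@hcat K a b c) i1 i2 c1 c2 \in @Iabc K a b c.
Proof.
apply: (minor_all (kr := @nat_of_ord a) (kc := @hcat_col b c)
  (P := fun x => x \in @Iabc K a b c)).
- exact: val_inj.
- exact: key_inj.
- exact: rpred0.
- by move=> x; rewrite rpredN.
- move=> r1 r2 d1 d2 h1 h2; apply: mem_gen; left.
  by exists r1, r2, d1, d2.
Qed.

Lemma vcat_all a b c r1 r2 j1 j2 :
  minor2 (@vcat K a b c) r1 r2 j1 j2 \in @Iabc K a b c.
Proof.
apply: (minor_all (kr := @vcat_row a c) (kc := @nat_of_ord b)
  (P := fun x => x \in @Iabc K a b c)).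
- exact: key_inj.
- exact: val_inj.
- exact: rpred0.
- by move=> x; rewrite rpredN.
- move=> s1 s2 d1 d2 h1 h2; apply: mem_gen; right.
  by exists s1, s2, d1, d2.
Qed.

Definition kmat a b c (ij : 'I_a * 'I_b) (k : 'I_c) : Rabc K a b c :=
  xv K ij.1 ij.2 k.

Lemma kmat_all a b c r1 r2 k1 k2 :
  minor2 (@kmat a b c) r1 r2 k1 k2 \in @Iabc K a b c.
Proof.
case: r1 => i1 j1; case: r2 => i2 j2.
have -> : minor2 (@kmat a b c) (i1, j1) (i2, j2) k1 k2 =
  minor2 (@hcat K a b c) i1 i2 (k1, j1) (k2, j2) +
  minor2 (@vcat K a b c) (k2, i1) (k1, i2) j2 j1.
  by rewrite /minor2 /kmat /hcat /vcat /=; ring.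
by rewrite rpredD ?hcat_all ?vcat_all.
Qed.

End Ideal.

Section Iso.
Variable K : fieldType.

Lemma renB a b c a' b' c' (E : idx a b c -> Rabc K a' b' c') p q :
  ren E (p - q) = ren E p - ren E q.
Proof. by rewrite /ren raddfB. Qed.
Lemma renD a b c a' b' c' (E : idx a b c -> Rabc K a' b' c') p q :
  ren E (p + q) = ren E p + ren E q.
Proof. by rewrite /ren raddfD. Qed.
Lemma ren0 a b c a' b' c' (E : idx a b c -> Rabc K a' b' c') :
  ren E 0 = 0.
Proof. by rewrite /ren raddf0. Qed.
Lemma renM a b c a' b' c' (E : idx a b c -> Rabc K a' b' c') p q :
  ren E (p * q) = ren E p * ren E q.
Proof. by rewrite /ren rmorphM. Qed.
Lemma ren1 a b c a' b' c' (E : idx a b c -> Rabc K a' b' c') :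
  ren E 1 = 1.
Proof. by rewrite /ren rmorph1. Qed.

Lemma iso_of_ren a b c a' b' c' (E : idx a b c -> Rabc K a' b' c')
  (F : idx a' b' c' -> Rabc K a b c) :
  (forall p, p \in @Iabc K a b c -> ren E p \in @Iabc K a' b' c') ->
  (forall p, p \in @Iabc K a' b' c' -> ren F p \in @Iabc K a b c) ->
  (forall p, ren F (ren E p) = p) -> (forall p, ren E (ren F p) = p) ->
  exists f : Qabc K a b c -> Qabc K a' b' c', kalg_iso f.
Proof.
move=> IE IF FE EF.
pose f (q : Qabc K a b c) : Qabc K a' b' c' := \pi_(Qabc K a' b' c') (ren E (repr q)).
pose g (q : Qabc K a' b' c') : Qabc K a b c := \pi_(Qabc K a b c) (ren F (repr q)).
have fpi p : f (\pi_(Qabc K a b c) p) = \pi_(Qabc K a' b' c') (ren E p).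
  rewrite /f; apply/eqP; rewrite -Quotient.idealrBE -renB; apply: IE.
  by rewrite Quotient.idealrBE reprK.
have gpi p : g (\pi_(Qabc K a' b' c') p) = \pi_(Qabc K a b c) (ren F p).
  rewrite /g; apply/eqP; rewrite -Quotient.idealrBE -renB; apply: IF.
  by rewrite Quotient.idealrBE reprK.
exists f; split.
- exists g => x.
    by rewrite -[x]reprK fpi gpi FE.
  by rewrite -[x]reprK gpi fpi EF.
- by move=> x y; rewrite -[x]reprK -[y]reprK -rmorphB /= !fpi renB rmorphB.
- refine (_, _).
    have e1 : (1 : Qabc K a b c) = \pi_(Qabc K a b c) 1 by rewrite rmorph1.
    by rewrite /= e1 fpi ren1 rmorph1.
  by move=> x y; rewrite -[x]reprK -[y]reprK -rmorphM /= !fpi renM rmorphM.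
- by move=> x; rewrite /Qcst fpi ren_C.
Qed.

End Iso.

Section Swaps.
Variable K : fieldType.

Lemma memI_eq (R : comNzRingType) (S : {pred R}) (x y : R) :
  x \in S -> x = y -> y \in S.
Proof. by move=> h <-. Qed.

Lemma ren_ideal a b c a' b' c' (E : idx a b c -> Rabc K a' b' c') :
  (forall q, minor_gens q -> ren E q \in @Iabc K a' b' c') ->
  forall p, p \in @Iabc K a b c -> ren E p \in @Iabc K a' b' c'.
Proof.
move=> H p /pboolP [s [Hs ->]].
rewrite (big_morph (ren E) (renD E) (ren0 E)).
rewrite big_seq; apply: rpred_sum => q qs; rewrite renM; apply: idealMr.
by apply: H; apply: Hs.
Qed.

Definition swij a b c (t : idx a b c) : Rabc K b a c := xv K t.1.2 t.1.1 t.2.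
Definition swjk a b c (t : idx a b c) : Rabc K a c b := xv K t.1.1 t.2 t.1.2.

Lemma swij_ideal a b c p :
  p \in @Iabc K a b c -> ren (@swij a b c) p \in @Iabc K b a c.
Proof.
apply: ren_ideal => q.
case=> [[i1 [i2 [[k1 j1] [[k2 j2] [_ [_ ->]]]]]]|[[k1 i1] [[k2 i2] [j1 [j2 [_ [_ ->]]]]]]].
- apply: (memI_eq (@vcat_all K b a c (k1, j1) (k2, j2) i1 i2)).
  rewrite /minor2 renB !renM /hcat /vcat /= !ren_xv /swij /=; ring.
- apply: (memI_eq (@hcat_all K b a c j1 j2 (k1, i1) (k2, i2))).
  rewrite /minor2 renB !renM /hcat /vcat /= !ren_xv /swij /=; ring.
Qed.

Lemma swjk_ideal a b c p :
  p \in @Iabc K a b c -> ren (@swjk a b c) p \in @Iabc K a c b.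
Proof.
apply: ren_ideal => q.
case=> [[i1 [i2 [[k1 j1] [[k2 j2] [_ [_ ->]]]]]]|[[k1 i1] [[k2 i2] [j1 [j2 [_ [_ ->]]]]]]].
- apply: (memI_eq (@hcat_all K a c b i1 i2 (j1, k1) (j2, k2))).
  rewrite /minor2 renB !renM /hcat /vcat /= !ren_xv /swjk /=; ring.
- apply: (memI_eq (@kmat_all K a c b (i1, k1) (i2, k2) j1 j2)).
  rewrite /minor2 renB !renM /kmat /hcat /vcat /= !ren_xv /swjk /=; ring.
Qed.

Lemma swij_inv a b c p : ren (@swij b a c) (ren (@swij a b c) p) = p.
Proof.
rewrite ren_comp -[RHS](@ren_id K a b c); apply: ren_ext => -[[i j] k].
by rewrite /swij /= ren_xv.
Qed.

Lemma swjk_inv a b c p : ren (@swjk a c b) (ren (@swjk a b c) p) = p.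
Proof.
rewrite ren_comp -[RHS](@ren_id K a b c); apply: ren_ext => -[[i j] k].
by rewrite /swjk /= ren_xv.
Qed.

Lemma Sij a b c : exists f : Qabc K a b c -> Qabc K b a c, kalg_iso f.
Proof.
apply: (@iso_of_ren K a b c b a c (@swij a b c) (@swij b a c)).
- exact: swij_ideal.
- exact: swij_ideal.
- exact: swij_inv.
- exact: swij_inv.
Qed.

Lemma Sjk a b c : exists f : Qabc K a b c -> Qabc K a c b, kalg_iso f.
Proof.
apply: (@iso_of_ren K a b c a c b (@swjk a b c) (@swjk a c b)).
- exact: swjk_ideal.
- exact: swjk_ideal.
- exact: swjk_inv.
- exact: swjk_inv.
Qed.

Lemma iso_comp a b c a' b' c' a'' b'' c''
  (f : Qabc K a b c -> Qabc K a' b' c') (g : Qabc K a' b' c' -> Qabc K a'' b'' c'') :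
  kalg_iso f -> kalg_iso g -> kalg_iso (g \o f).
Proof.
case=> bf zf [f1 fM] fc; case=> bg zg [g1 gM] gc; split.
- exact: bij_comp.
- by move=> x y /=; rewrite zf zg.
- by refine (_, _) => [|x y] /=; rewrite ?f1 ?g1 ?fM ?gM.
- by move=> x /=; rewrite fc gc.
Qed.

Lemma iso_id a b c : exists f : Qabc K a b c -> Qabc K a b c, kalg_iso f.
Proof.
by exists id; split => //; exists id.
Qed.

Lemma ex_comp a b c a' b' c' a'' b'' c'' :
  (exists f : Qabc K a b c -> Qabc K a' b' c', kalg_iso f) ->
  (exists g : Qabc K a' b' c' -> Qabc K a'' b'' c'', kalg_iso g) ->
  exists h : Qabc K a b c -> Qabc K a'' b'' c'', kalg_iso h.
Proof. by move=> [f hf] [g hg]; exists (g \o f); apply: iso_comp. Qed.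

End Swaps.

Lemma perm2 (x y n' r' : nat) : perm_eq [:: x; y] [:: n'; r'] ->
  (n' = x /\ r' = y) \/ (n' = y /\ r' = x).
Proof.
move/perm_consP => [j [w [hw hp]]].
have ew : w = [:: r'] by apply: perm_small_eq.
subst w.
case: j hw => [|[|j]] /= [-> ->]; by [left | right | left].
Qed.

Lemma perm3 (m n r m' n' r' : nat) : perm_eq [:: m; n; r] [:: m'; n'; r'] ->
  (m', n', r') = (m, n, r) \/ (m', n', r') = (m, r, n) \/ (m', n', r') = (n, m, r) \/
      (m', n', r') = (n, r, m) \/ (m', n', r') = (r, m, n) \/ (m', n', r') = (r, n, m).
Proof.
move/perm_consP => [i [u [hu hp]]].
case: i hu => [|[|[|i]]] /= [<- hu]; subst u; case/perm2: hp => -[-> ->].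
all: do ?[by left | right]; done.
Qed.

Theorem theorem4p1 (K : fieldType) (m n r m' n' r' : nat) :
  (0 < m)%N -> (0 < n)%N -> (0 < r)%N ->
  perm_eq [:: m; n; r] [:: m'; n'; r'] ->
  exists f : Qabc K m n r -> Qabc K m' n' r', kalg_iso f.
Proof.
move=> _ _ _ /perm3.
case=> [[-> -> ->]|[[-> -> ->]|[[-> -> ->]|[[-> -> ->]|[[-> -> ->]|[-> -> ->]]]]]].
- exact: iso_id.
- exact: Sjk.
- exact: Sij.
- exact: (ex_comp (Sij K m n r) (Sjk K n m r)).
- exact: (ex_comp (Sjk K m n r) (Sij K m r n)).
- exact: (ex_comp (ex_comp (Sij K m n r) (Sjk K n m r)) (Sij K n r m)).
Qed.
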